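(* Let $\kappa\in\mathbb Z[q,q^{-1}]$ satisfy $\overline{\kappa}=\kappa$, write $\kappa=\sum_{i\in\mathbb Z}c_iq^i$, and set $\diamondsuit=\sum_{i\in\mathbb Z}(-1)^ic_{2i}$. Let $t=F+\check E+\kappa K^{-1}$, $B_{\rm ev}=\frac{t^2-\diamondsuit^2}{[2]}$ and $B_{\rm odd}=\frac{t^2-1+\diamondsuit^2}{[2]}$. Then in $\mathbf U$ $$B_{\rm ev}=\check E^{(2)}+q^{-1}\check EF+F^{(2)}+q^{-1}\kappa K^{-1}F+q^{-1}\kappa\check EK^{-1}+\bigl(q+(q^3-q)\kappa^2\bigr)\frac{K^{-2}-1}{q^4-1}+\frac{\kappa^2-\diamondsuit^2}{[2]},$$ $$B_{\rm odd}=\check E^{(2)}+q^{-1}\check EF+F^{(2)}+q^{-1}\kappa K^{-1}F+q^{-1}\kappa\check EK^{-1}+\bigl(q+(q^3-q)\kappa^2\bigr)\frac{K^{-2}-q^2}{q^4-1}+\frac{q^2(\kappa^2-\diamondsuit^2)}{[2]}+q\diamondsuit^2.$$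
   Context: $q$ is an indeterminate, bar is the ring involution of $\mathbb Z[q,q^{-1}]$ with $q\mapsto q^{-1}$, $[n]=\frac{q^n-q^{-n}}{q-q^{-1}}$, $[2]!=[2]$. $\mathbf U$ is the $\mathbb Q(q)$-algebra generated by $E,F,K^{\pm1}$ with relations $KK^{-1}=K^{-1}K=1$, $EF-FE=\frac{K-K^{-1}}{q-q^{-1}}$, $KE=q^2EK$, $KF=q^{-2}FK$; $\check E=q^{-1}EK^{-1}$, $\check E^{(2)}=\check E^2/[2]$, $F^{(2)}=F^2/[2]$. *)

(* Defs.v *)
From HB Require Import structures.
From mathcomp Require Import all_boot all_order all_algebra.
Set Implicit Arguments. Unset Strict Implicit. Unset Printing Implicit Defensive.
Import Order.TTheory GRing.Theory Num.Theory.
Local Open Scope ring_scope.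

Definition Qq : fieldType := {fraction {poly rat}}.
Definition qv : Qq := tofrac ('X : {poly rat}).

Definition qnum (n : nat) : Qq := (qv ^+ n - qv ^- n) / (qv - qv^-1).

(* A Laurent polynomial kappa in Z[q,q^-1] is given by integer coefficients
   c : int -> int supported in [-M, M]. *)
Definition laurent (M : nat) (c : int -> int) : Qq :=
  \sum_(k < (M + M).+1) (c (k%:Z - M%:Z))%:~R * qv ^ (k%:Z - M%:Z).

Definition laurent_bar (M : nat) (c : int -> int) : Qq :=
  \sum_(k < (M + M).+1) (c (k%:Z - M%:Z))%:~R * qv ^ (- (k%:Z - M%:Z)).

(* diamond = sum_i (-1)^i c_{2i}; terms with |i| > M vanish since c_{2i} = 0 *)
Definition diamond (M : nat) (c : int -> int) : int :=
  \sum_(k < (M + M).+1) (-1) ^+ `|k%:Z - M%:Z|%N * c (2 * (k%:Z - M%:Z)).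

Definition Uq_rel (A : algType Qq) (E F K Ki : A) : Prop :=
  [/\ K * Ki = 1, Ki * K = 1,
      E * F - F * E = (qv - qv^-1)^-1 *: (K - Ki),
      K * E = qv ^+ 2 *: (E * K) &
      K * F = qv ^- 2 *: (F * K)].

(* Main.v *)
Require Import Defs.
From HB Require Import structures.
From mathcomp Require Import all_boot all_order all_algebra.
From mathcomp Require Import ring.
Set Implicit Arguments. Unset Strict Implicit. Unset Printing Implicit Defensive.
Import Order.TTheory GRing.Theory Num.Theory.
Local Open Scope ring_scope.
Section LC.
Variables (F : fieldType) (V : lmodType F) (X1 X2 X3 X4 X5 X6 X7 : V).
Definition lc (a1 a2 a3 a4 a5 a6 a7 : F) : V :=
  a1 *: X1 + a2 *: X2 + a3 *: X3 + a4 *: X4 + a5 *: X5 + a6 *: X6 + a7 *: X7.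
Lemma lc_pack : exists L : F -> F -> F -> F -> F -> F -> F -> V,
  [/\ X1 = L 1 0 0 0 0 0 0, X2 = L 0 1 0 0 0 0 0, X3 = L 0 0 1 0 0 0 0,
      X4 = L 0 0 0 1 0 0 0 & X5 = L 0 0 0 0 1 0 0] /\
  [/\ X6 = L 0 0 0 0 0 1 0, X7 = L 0 0 0 0 0 0 1,
   (forall a1 a2 a3 a4 a5 a6 a7 b1 b2 b3 b4 b5 b6 b7,
      L a1 a2 a3 a4 a5 a6 a7 + L b1 b2 b3 b4 b5 b6 b7
      = L (a1 + b1) (a2 + b2) (a3 + b3) (a4 + b4) (a5 + b5) (a6 + b6) (a7 + b7)),
   (forall s a1 a2 a3 a4 a5 a6 a7,
      s *: L a1 a2 a3 a4 a5 a6 a7 = L (s * a1) (s * a2) (s * a3) (s * a4) (s * a5) (s * a6) (s * a7)) &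
   (forall a1 a2 a3 a4 a5 a6 a7,
      - L a1 a2 a3 a4 a5 a6 a7 = L (- a1) (- a2) (- a3) (- a4) (- a5) (- a6) (- a7))].
Proof.
exists lc; split; first by split; rewrite /lc !scale0r ?scale1r !(add0r, addr0).
split.
- by rewrite /lc !scale0r ?scale1r !(add0r, addr0).
- by rewrite /lc !scale0r ?scale1r !(add0r, addr0).
- move=> *; rewrite /lc !scalerDl; by rewrite !addrA; rewrite (ACl (1*8*2*9*3*10*4*11*5*12*6*13*7*14)%AC).
- by move=> *; rewrite /lc !scalerDr !scalerA.
- by move=> *; rewrite /lc !opprD !scaleNr.
Qed.
End LC.
Section Main.
Variables (F : fieldType) (A : algType F) (q : F) (E Fm K Ki : A).
Hypotheses (hq : q != 0) (hm : q^+2 - 1 != 0) (hp : q^+2 + 1 != 0).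
Hypotheses (h1 : K*Ki = 1) (h2: Ki*K = 1)
  (h3 : E*Fm - Fm*E = (q - q^-1)^-1 *: (K - Ki))
  (h4: K*E = q^+2 *: (E*K)) (h5 : K*Fm = q^-2 *: (Fm*K)).

Lemma q2V : q^+2 * q^-2 = 1.
Proof. by rewrite mulfV // expf_neq0. Qed.

Lemma FK : Fm * K = q^+2 *: (K * Fm).
Proof. by rewrite h5 scalerA q2V scale1r. Qed.

Lemma EK : E * K = q^-2 *: (K * E).
Proof. by rewrite h4 scalerA mulrC q2V scale1r. Qed.

Lemma KiF : Ki * Fm = q^+2 *: (Fm * Ki).
Proof.
rewrite -[Ki * Fm]mulr1 -h1 mulrA -(mulrA Ki) FK -scalerAr -scalerAl mulrA h2 mul1r.
by [].
Qed.

Lemma FKi : Fm * Ki = q^-2 *: (Ki * Fm).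
Proof. by rewrite KiF scalerA mulrC q2V scale1r. Qed.

Lemma KiE : Ki * E = q^-2 *: (E * Ki).
Proof.
rewrite -[Ki * E]mulr1 -h1 mulrA -(mulrA Ki) EK -scalerAr -scalerAl mulrA h2 mul1r.
by [].
Qed.
Lemma q2Vq : q^-1 * q^+2 = q.
Proof. by rewrite expr2 mulrA mulVf // mul1r. Qed.

Lemma qqV : q - q^-1 != 0.
Proof.
have -> : q - q^-1 = (q^+2 - 1) / q by field.
by rewrite mulf_neq0 // invr_eq0.
Qed.

Let Ec := q^-1 *: (E * Ki).

Lemma KiEc : Ki * Ec = q^-2 *: (Ec * Ki).
Proof. by rewrite /Ec -scalerAr mulrA KiE -!scalerAl !scalerA mulrC. Qed.

Lemma EcF : Ec * Fm = q *: (E * Fm * Ki).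
Proof. by rewrite /Ec -scalerAl -(mulrA E Ki) KiF -scalerAr scalerA q2Vq mulrA. Qed.

Lemma FE : Fm * E = E * Fm - (q - q^-1)^-1 *: (K - Ki).
Proof. by rewrite -h3 opprB addrC subrK. Qed.

Lemma FEc : Fm * Ec = q^-2 *: (Ec * Fm) + (q^-1 * (q - q^-1)^-1) *: (Ki * Ki - 1).
Proof.
rewrite EcF /Ec -scalerAr mulrA FE mulrBl -scalerAl mulrBl h1.
have [L [[e1 e2 e3 _ _] [_ _ hD hZ hN]]] := @lc_pack _ _ (E * Fm * Ki) (Ki * Ki) 1 0 0 0 0.
rewrite e1 e2 e3.
rewrite !(hZ, hN, hD).
f_equal; field; by rewrite -?expr2 hq ?hm ?hp.
Qed.
Lemma main_gen (kap dia : F) :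
  let Ec2 : A := ((q ^+ 2 - q ^- 2) / (q - q^-1))^-1 *: Ec ^+ 2 in
  let F2 : A := ((q ^+ 2 - q ^- 2) / (q - q^-1))^-1 *: Fm ^+ 2 in
  let t : A := Fm + Ec + kap *: Ki in
  let common : A := Ec2 + q^-1 *: (Ec * Fm) + F2 + (q^-1 * kap) *: (Ki * Fm)
                    + (q^-1 * kap) *: (Ec * Ki) in
  let coef : F := (q + (q ^+ 3 - q) * kap ^+ 2) / (q ^+ 4 - 1) in
  ((q ^+ 2 - q ^- 2) / (q - q^-1))^-1 *: (t ^+ 2 - (dia ^+ 2)%:A)
    = common + coef *: (Ki ^+ 2 - 1) + ((kap ^+ 2 - dia ^+ 2) / ((q ^+ 2 - q ^- 2) / (q - q^-1)))%:A
  /\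
  ((q ^+ 2 - q ^- 2) / (q - q^-1))^-1 *: (t ^+ 2 - 1 + (dia ^+ 2)%:A)
    = common + coef *: (Ki ^+ 2 - (q ^+ 2)%:A)
      + (q ^+ 2 * (kap ^+ 2 - dia ^+ 2) / ((q ^+ 2 - q ^- 2) / (q - q^-1)))%:A + (q * dia ^+ 2)%:A.
Proof.
move=> Ec2 F2 t common coef; rewrite /common /Ec2 /F2 /t /coef.
have fe := FEc; have ke := KiEc; clearbody Ec.
rewrite !(@expr2 A) !(@mulrDl A, @mulrDr A) -!scalerAl -!scalerAr.
rewrite fe FKi ke.
have [L [[e1 e2 e3 e4 e5] [e6 e7 hD hZ hN]]] :=
  @lc_pack _ _ (Fm * Fm) (Ec * Ec) (Ki * Ki) 1 (Ki * Fm) (Ec * Ki) (Ec * Fm).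
rewrite e1 e2 e3 e5 e6 e7 e4.
rewrite !(hZ, hN, hD).
have q4 : (q ^+ 2) ^+ 2 - 1 != 0.
  have -> : (q ^+ 2) ^+ 2 - 1 = (q^+2 - 1) * (q^+2 + 1) by ring.
  by rewrite mulf_neq0.
split; f_equal; field; by rewrite -?expr2 hq hm q4.
Qed.
End Main.

Lemma poly_ev0 (p : {poly rat}) : p.[0] != 0 -> tofrac p != 0.
Proof. by rewrite tofrac_eq0; apply: contra => /eqP ->; rewrite horner0. Qed.

Lemma qv_neq0 : qv != 0.
Proof. by rewrite /qv tofrac_eq0 polyX_eq0. Qed.

Lemma q2m_neq0 : qv ^+ 2 - 1 != 0.
Proof.
rewrite /qv -tofrac1 -tofracXn -tofracN -tofracD; apply: poly_ev0.
by rewrite !hornerE.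
Qed.

Lemma q2p_neq0 : qv ^+ 2 + 1 != 0.
Proof.
rewrite /qv -tofrac1 -tofracXn -tofracD; apply: poly_ev0.
by rewrite !hornerE.
Qed.

Theorem propositionA3 (M : nat) (c : int -> int)
  (hc : forall i : int, (M < `|i|)%N -> c i = 0)
  (hbar : laurent_bar M c = laurent M c)
  (A : algType Qq) (E F K Ki : A) (hrel : Uq_rel E F K Ki) :
  let kap : Qq := laurent M c in
  let dia : Qq := (diamond M c)%:~R in
  let Ec : A := qv^-1 *: (E * Ki) in
  let Ec2 : A := (qnum 2)^-1 *: Ec ^+ 2 in
  let F2 : A := (qnum 2)^-1 *: F ^+ 2 in
  let t : A := F + Ec + kap *: Ki in
  let common : A := Ec2 + qv^-1 *: (Ec * F) + F2 + (qv^-1 * kap) *: (Ki * F)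
                    + (qv^-1 * kap) *: (Ec * Ki) in
  let coef : Qq := (qv + (qv ^+ 3 - qv) * kap ^+ 2) / (qv ^+ 4 - 1) in
  (qnum 2)^-1 *: (t ^+ 2 - (dia ^+ 2)%:A)
    = common + coef *: (Ki ^+ 2 - 1) + ((kap ^+ 2 - dia ^+ 2) / qnum 2)%:A
  /\
  (qnum 2)^-1 *: (t ^+ 2 - 1 + (dia ^+ 2)%:A)
    = common + coef *: (Ki ^+ 2 - (qv ^+ 2)%:A)
      + (qv ^+ 2 * (kap ^+ 2 - dia ^+ 2) / qnum 2)%:A + (qv * dia ^+ 2)%:A.
Proof.
move=> kap dia.
case: hrel => h1 h2 h3 h4 h5.
exact: (main_gen qv_neq0 q2m_neq0 q2p_neq0 h1 h2 h3 h4 h5 kap dia).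
Qed.
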